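(* Model $\mathbb H^2$ as the Poincaré upper half-plane $\{(u,v)\in\mathbb R^2: v>0\}$ with metric $ds^2=(du^2+dv^2)/v^2$, and consider $\mathbb H^2\times\mathbb R$ with the product metric. Let $A=((0,3),0)$, $B=((4,5),1)$, $C=((-4,5),1)$. Then $$\operatorname{conv}\{A,B,C\}\neq\bigcup\{[A,D]\mid D\in[B,C]\}.$$ More precisely, the point $\bigl((0,\sqrt{17}),\,1-\tfrac{\ln2}{\ln3}\bigr)$ lies in $\operatorname{conv}\{A,B,C\}$, while the only point of $\bigcup\{[A,D]\mid D\in[B,C]\}$ with first coordinate $(0,\sqrt{17})$ is $\bigl((0,\sqrt{17}),\,\tfrac{\ln17-2\ln3}{\ln41-2\ln3}\bigr)$, and these two numbers differ (the first is $<2/5$, the second $>2/5$).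
   Context: In $\mathbb H^2\times\mathbb R$ (a Cartan--Hadamard manifold), the geodesic segment $[P,Q]$ from $P=(x_0,y_0)$ to $Q=(x_1,y_1)$ is $\{(c(t),(1-t)y_0+ty_1): t\in[0,1]\}$, where $c\colon[0,1]\to\mathbb H^2$ is the constant-speed hyperbolic geodesic with $c(0)=x_0$, $c(1)=x_1$. A set $K$ is convex if $[P,Q]\subseteq K$ for all $P,Q\in K$, and $\operatorname{conv}(H)$ is the intersection of all convex sets containing $H$. The hyperbolic distance in the half-plane model is $d(a,b)=2\ln\frac{\sqrt{(a_1-b_1)^2+(a_2-b_2)^2}+\sqrt{(a_1-b_1)^2+(a_2+b_2)^2}}{2\sqrt{a_2b_2}}$. *)

(* Defs.v *)
From Stdlib Require Export Reals.
Open Scope R_scope.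

(* A point of H^2 (upper half-plane model): a pair (u,v), meaningful when v > 0. *)
Definition H2pt := (R * R)%type.
Definition Pt := (H2pt * R)%type.

Definition dH (a b : H2pt) : R :=
  2 * ln ((sqrt ((fst a - fst b)^2 + (snd a - snd b)^2)
           + sqrt ((fst a - fst b)^2 + (snd a + snd b)^2))
          / (2 * sqrt (snd a * snd b))).

Definition hgeod (x0 x1 : H2pt) (c : R -> H2pt) : Prop :=
  c 0 = x0 /\ c 1 = x1 /\
  forall s t, 0 <= s <= 1 -> 0 <= t <= 1 ->
    0 < snd (c t) /\ dH (c s) (c t) = Rabs (s - t) * dH x0 x1.

Definition segment (P Q : Pt) : Pt -> Prop :=
  fun X => exists c, hgeod (fst P) (fst Q) c /\
    exists t, 0 <= t <= 1 /\ X = (c t, (1 - t) * snd P + t * snd Q).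

Definition convex (K : Pt -> Prop) : Prop :=
  forall P Q, K P -> K Q -> forall X, segment P Q X -> K X.

Definition conv (H : Pt -> Prop) : Pt -> Prop :=
  fun X => forall K, convex K -> (forall Y, H Y -> K Y) -> K X.

Definition ptA : Pt := ((0, 3), 0).
Definition ptB : Pt := ((4, 5), 1).
Definition ptC : Pt := ((-4, 5), 1).

Definition triple (A B C : Pt) : Pt -> Prop := fun X => X = A \/ X = B \/ X = C.

Definition cone (A B C : Pt) : Pt -> Prop :=
  fun X => exists D, segment B C D /\ segment A D X.

(* Main.v *)
Require Import Defs.
From Stdlib Require Import Reals Lra Psatz.
Open Scope R_scope.

Definition kq (a b : H2pt) : R :=
  ((fst a - fst b)^2 + snd a ^2 + snd b ^2)/(snd a * snd b).

Lemma dH_exp (a b : H2pt) : 0 < snd a -> 0 < snd b ->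
  1 <= exp (dH a b) /\ exp (dH a b) + / exp (dH a b) = kq a b.
Proof.
  destruct a as [ua va], b as [ub vb]; cbn [fst snd]; intros Ha Hb.
  unfold dH, kq; cbn [fst snd].
  set (x := ua - ub). clearbody x.
  assert (Hx2 : 0 <= x^2) by nra.
  pose proof (pow2_ge_0 (va-vb)). pose proof (pow2_ge_0 (va+vb)).
  pose proof (sqrt_sqrt (x^2 + (va-vb)^2) ltac:(lra)) as Hal.
  pose proof (sqrt_sqrt (x^2 + (va+vb)^2) ltac:(lra)) as Hbe.
  pose proof (sqrt_sqrt (va*vb) ltac:(nra)) as Hs.
  pose proof (sqrt_pos (x^2 + (va-vb)^2)) as Hal0.
  pose proof (sqrt_pos (x^2 + (va+vb)^2)) as Hbe0.
  pose proof (sqrt_lt_R0 (va*vb) ltac:(nra)) as Hs0.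
  set (al := sqrt (x^2 + (va-vb)^2)) in *.
  set (be := sqrt (x^2 + (va+vb)^2)) in *.
  set (s := sqrt (va*vb)) in *.
  clearbody al be s.
  assert (Hbs : 2*s <= be) by nra.
  set (y := (al+be)/(2*s)).
  assert (Hyd : y = (al+be)/(2*s)) by reflexivity. clearbody y.
  assert (Hy : 1 <= y).
  { rewrite Hyd. apply (Rmult_le_reg_r (2*s)); [lra|]. field_simplify; lra. }
  assert (Hex : exp (2 * ln y) = y*y).
  { replace (2 * ln y) with (ln y + ln y) by ring. rewrite exp_plus, exp_ln; lra. }
  rewrite Hex. split; [nra|].
  assert (Hinv : / y = (be-al)/(2*s)).
  { rewrite Hyd. assert (0 < al + be) by lra.
    apply (Rmult_eq_reg_l ((al+be)/(2*s))); [|apply Rgt_not_eq; apply Rdiv_lt_0_compat; lra].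
    rewrite Rinv_r by (apply Rgt_not_eq; apply Rdiv_lt_0_compat; lra).
    replace ((al + be) / (2 * s) * ((be - al) / (2 * s))) with ((be*be - al*al)/(4*(s*s))) by (field; lra).
    rewrite Hal, Hbe, Hs. field. nra. }
  rewrite Rinv_mult, Hinv, Hyd.
  replace ((al + be) / (2 * s) * ((al + be) / (2 * s)) +
   (be - al) / (2 * s) * ((be - al) / (2 * s))) with ((2*(al*al)+2*(be*be))/(4*(s*s))) by (field; lra).
  rewrite Hal, Hbe, Hs. field. lra.
Qed.

Lemma inv_sum_uniq E1 E2 : 1 <= E1 -> 1 <= E2 -> E1 + / E1 = E2 + / E2 -> E1 = E2.
Proof.
  intros H1 H2 H.
  assert (H' : (E1 - E2) * (E1*E2 - 1) = 0).
  { replace ((E1 - E2) * (E1*E2 - 1)) with ((E1 + / E1 - (E2 + / E2))*(E1*E2)) by (field; lra).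
    rewrite H. ring. }
  destruct (Rmult_integral _ _ H'); nra.
Qed.

Lemma dH_val a b w : 0 < snd a -> 0 < snd b -> 1 <= w -> kq a b = w + / w -> dH a b = ln w.
Proof.
  intros Ha Hb Hw Hk. destruct (dH_exp a b Ha Hb) as [H1 H2].
  assert (exp (dH a b) = w) by (apply inv_sum_uniq; lra).
  rewrite <- H, ln_exp; reflexivity.
Qed.

Lemma fam_dist (P : R -> H2pt) :
  (forall t, 0 < snd (P t)) ->
  (forall t1 t2, kq (P t1) (P t2) = exp (t1 - t2) + exp (t2 - t1)) ->
  forall t1 t2, dH (P t1) (P t2) = Rabs (t1 - t2).
Proof.
  intros Hp Hk t1 t2. rewrite <- (ln_exp (Rabs (t1 - t2))).
  apply dH_val; auto.
  - rewrite <- exp_0. destruct (Rle_dec 0 (Rabs (t1-t2))) as [h|h].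
    + destruct h as [h|h]; [left; apply exp_increasing; lra| rewrite h; lra].
    + pose proof (Rabs_pos (t1-t2)); lra.
  - rewrite Hk. unfold Rabs; destruct (Rcase_abs (t1-t2)).
    + rewrite <- exp_Ropp. replace (- - (t1-t2)) with (t1 - t2) by ring.
      replace (- (t1-t2)) with (t2 - t1) by ring. ring.
    + rewrite <- exp_Ropp. replace (- (t1-t2)) with (t2 - t1) by ring. ring.
Qed.

Lemma fam_hgeod (P : R -> H2pt) :
  (forall t, 0 < snd (P t)) ->
  (forall t1 t2, kq (P t1) (P t2) = exp (t1 - t2) + exp (t2 - t1)) ->
  forall a b, hgeod (P a) (P b) (fun t => P (a + t * (b - a))).
Proof.
  intros Hp Hk a b. pose proof (fam_dist P Hp Hk) as Hd.
  split; [|split].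
  - f_equal; ring.
  - f_equal; ring.
  - intros s t _ _. split; [apply Hp|]. rewrite !Hd.
    replace (a + s * (b - a) - (a + t * (b - a))) with ((s - t) * (b - a)) by ring.
    rewrite Rabs_mult. f_equal. rewrite <- Rabs_Ropp. f_equal. ring.
Qed.

Definition Pc (m r t : R) : H2pt :=
  (m + r * (exp t ^ 2 - 1) / (exp t ^ 2 + 1), 2 * r * exp t / (exp t ^ 2 + 1)).

Definition Pv (u t : R) : H2pt := (u, exp t).

Lemma exp_sub a b : exp (a - b) = exp a / exp b.
Proof. unfold Rminus, Rdiv. rewrite exp_plus, exp_Ropp. reflexivity. Qed.

Lemma Pc_pos m r : 0 < r -> forall t, 0 < snd (Pc m r t).
Proof.
  intros Hr t. unfold Pc; cbn [snd]. pose proof (exp_pos t).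
  apply Rdiv_lt_0_compat; nra.
Qed.

Lemma Pc_kq m r : 0 < r -> forall t1 t2, kq (Pc m r t1) (Pc m r t2) = exp (t1 - t2) + exp (t2 - t1).
Proof.
  intros Hr t1 t2. rewrite !exp_sub. unfold kq, Pc; cbn [fst snd].
  pose proof (exp_pos t1). pose proof (exp_pos t2).
  set (w1 := exp t1) in *. set (w2 := exp t2) in *. clearbody w1 w2.
  field. repeat split; nra.
Qed.

Lemma Pv_kq u : forall t1 t2, kq (Pv u t1) (Pv u t2) = exp (t1 - t2) + exp (t2 - t1).
Proof.
  intros t1 t2. rewrite !exp_sub. unfold kq, Pv; cbn [fst snd].
  pose proof (exp_pos t1). pose proof (exp_pos t2).
  set (w1 := exp t1) in *. set (w2 := exp t2) in *. clearbody w1 w2.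
  field. repeat split; nra.
Qed.

Lemma Pv_pos u t : 0 < snd (Pv u t).
Proof. apply exp_pos. Qed.

Lemma Pc_ln m r w : 0 < w -> Pc m r (ln w) = (m + r*(w^2-1)/(w^2+1), 2*r*w/(w^2+1)).
Proof. intros Hw. unfold Pc. rewrite exp_ln by lra. reflexivity. Qed.

Lemma Pc_mln m r w : 0 < w -> Pc m r (- ln w) = (m + r*((/w)^2-1)/((/w)^2+1), 2*r*(/w)/((/w)^2+1)).
Proof. intros Hw. unfold Pc. rewrite exp_Ropp, exp_ln by lra. reflexivity. Qed.

Lemma Pc_0 m r : Pc m r 0 = (m, r).
Proof. unfold Pc. rewrite exp_0. f_equal; field. Qed.

Lemma ln2_pos : 0 < ln 2.
Proof. rewrite <- ln_1. apply ln_increasing; lra. Qed.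
Lemma ln23 : ln 2 < ln 3.
Proof. apply ln_increasing; lra. Qed.

Definition s0 := 1 - ln 2 / ln 3.

Lemma s0_range : 0 <= s0 <= 1.
Proof.
  unfold s0. pose proof ln2_pos. pose proof ln23.
  assert (0 < ln 2 / ln 3 < 1).
  { split. apply Rdiv_lt_0_compat; lra. apply (Rmult_lt_reg_r (ln 3)); [lra|].
    field_simplify; lra. }
  lra.
Qed.

Lemma sqrt17_sq : sqrt 17 * sqrt 17 = 17.
Proof. apply sqrt_sqrt; lra. Qed.
Lemma sqrt17_pos : 0 < sqrt 17.
Proof. apply sqrt_lt_R0; lra. Qed.
Lemma sqrt17_gt4 : 4 < sqrt 17.
Proof. pose proof sqrt17_sq; pose proof sqrt17_pos; nra. Qed.

Lemma div_eq a b c : b <> 0 -> a = c * b -> a / b = c.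
Proof. intros. subst. field. auto. Qed.
Ltac fdiv := field_simplify; [apply div_eq; nra | nra ..].
Lemma w17 q : q*q = 17 -> 4 < q -> let w0 := (q+1)/4 in
  0 + q*(w0^2-1)/(w0^2+1) = 1 /\ 2*q*w0/(w0^2+1) = 4 /\
  0 + q*(((q-1)/4)^2-1)/(((q-1)/4)^2+1) = -1 /\ 2*q*((q-1)/4)/(((q-1)/4)^2+1) = 4 /\ / w0 = (q-1)/4.
Proof.
  intros Hq H4 w0.
  assert (Hw2 : w0^2 = (18 + 2*q)/16) by (unfold w0; field_simplify; nra).
  assert (Hv2 : ((q-1)/4)^2 = (18 - 2*q)/16) by (field_simplify; nra).
  rewrite Hw2, Hv2. repeat split.
  - fdiv.
  - unfold w0. fdiv.
  - fdiv.
  - fdiv.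
  - unfold w0. fdiv.
Qed.

Lemma part_conv : conv (triple ptA ptB ptC) ((0, sqrt 17), 1 - ln 2 / ln 3).
Proof.
  intros K HK Hsub.
  pose proof ln2_pos. pose proof ln23. pose proof s0_range.
  assert (KA : K ptA) by (apply Hsub; left; reflexivity).
  assert (KB : K ptB) by (apply Hsub; right; left; reflexivity).
  assert (KC : K ptC) by (apply Hsub; right; right; reflexivity).
  assert (K1 : K ((1,4), s0)).
  { apply (HK ptA ptB KA KB).
    exists (fun t => Pc 4 5 (- ln 3 + t * (0 - - ln 3))). split.
    - replace (fst ptA) with (Pc 4 5 (- ln 3)).
      2:{ rewrite Pc_mln by lra. unfold ptA; simpl. f_equal; field. }
      replace (fst ptB) with (Pc 4 5 0).
      2:{ rewrite Pc_0. reflexivity. }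
      apply fam_hgeod. apply Pc_pos; lra. apply Pc_kq; lra.
    - exists s0. split; [exact s0_range|]. unfold ptA, ptB; cbn [fst snd].
      replace (- ln 3 + s0 * (0 - - ln 3)) with (- ln 2) by (unfold s0; field; lra).
      rewrite Pc_mln by lra. f_equal. f_equal; field. ring. }
  assert (K2 : K ((-1,4), s0)).
  { apply (HK ptA ptC KA KC).
    exists (fun t => Pc (-4) 5 (ln 3 + t * (0 - ln 3))). split.
    - replace (fst ptA) with (Pc (-4) 5 (ln 3)).
      2:{ rewrite Pc_ln by lra. unfold ptA; simpl. f_equal; field. }
      replace (fst ptC) with (Pc (-4) 5 0).
      2:{ rewrite Pc_0. reflexivity. }
      apply fam_hgeod. apply Pc_pos; lra. apply Pc_kq; lra.
    - exists s0. split; [exact s0_range|]. unfold ptA, ptC; cbn [fst snd].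
      replace (ln 3 + s0 * (0 - ln 3)) with (ln 2) by (unfold s0; field; lra).
      rewrite Pc_ln by lra. f_equal. f_equal; field. ring. }
  pose proof sqrt17_sq. pose proof sqrt17_pos. pose proof sqrt17_gt4.
  set (w0 := (sqrt 17 + 1) / 4).
  assert (Hw0 : 0 < w0) by (unfold w0; lra).
  apply (HK _ _ K1 K2).
  exists (fun t => Pc 0 (sqrt 17) (ln w0 + t * (- ln w0 - ln w0))). split.
  - cbn [fst]. replace (1,4) with (Pc 0 (sqrt 17) (ln w0)).
    2:{ destruct (w17 (sqrt 17)) as (e1 & e2 & e3 & e4 & e5); auto.
        rewrite Pc_ln by lra. fold w0 in e1, e2. rewrite e1, e2. reflexivity. }
    replace (-1,4) with (Pc 0 (sqrt 17) (- ln w0)).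
    2:{ destruct (w17 (sqrt 17)) as (e1 & e2 & e3 & e4 & e5); auto.
        rewrite Pc_mln by lra. fold w0 in e5. rewrite e5, e3, e4. reflexivity. }
    apply fam_hgeod. apply Pc_pos; lra. apply Pc_kq; lra.
  - exists (/2). split; [lra|]. cbn [fst snd].
    replace (ln w0 + / 2 * (- ln w0 - ln w0)) with 0 by field.
    rewrite Pc_0. f_equal. unfold s0. ring.
Qed.

Lemma ln_sqrt_half x : 0 < x -> ln (sqrt x) = ln x / 2.
Proof.
  intros Hx. pose proof (sqrt_lt_R0 x Hx).
  rewrite <- (sqrt_sqrt x) at 2 by lra. rewrite ln_mult by lra. field.
Qed.


Lemma ln3_pos : 0 < ln 3.
Proof. rewrite <- ln_1. apply ln_increasing; lra. Qed.

Lemma num1 : 1 - ln 2 / ln 3 < 2 / 5.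
Proof.
  pose proof ln3_pos.
  assert (H5 : ln (2^5) = 5 * ln 2) by (rewrite ln_pow by lra; simpl; ring).
  assert (H3 : ln (3^3) = 3 * ln 3) by (rewrite ln_pow by lra; simpl; ring).
  assert (ln (3^3) < ln (2^5)) by (apply ln_increasing; simpl; lra).
  assert (3/5 < ln 2 / ln 3).
  { apply (Rmult_lt_reg_r (ln 3)); [lra|]. field_simplify; lra. }
  lra.
Qed.

Lemma ln9 : 2 * ln 3 = ln 9.
Proof. replace 9 with (3*3) by ring. rewrite ln_mult by lra. ring. Qed.

Lemma den_pos : 0 < ln 41 - 2 * ln 3.
Proof. rewrite ln9. assert (ln 9 < ln 41) by (apply ln_increasing; lra). lra. Qed.

Lemma num2 : 2 / 5 < (ln 17 - 2 * ln 3) / (ln 41 - 2 * ln 3).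
Proof.
  pose proof den_pos. pose proof ln3_pos.
  assert (Ha : ln (41^2 * 3^6) = 2 * ln 41 + 6 * ln 3).
  { rewrite ln_mult by (simpl; lra). rewrite !ln_pow by lra. simpl. ring. }
  assert (Hb : ln (17^5) = 5 * ln 17) by (rewrite ln_pow by lra; simpl; ring).
  assert (ln (41^2 * 3^6) < ln (17^5)) by (apply ln_increasing; simpl; lra).
  apply (Rmult_lt_reg_r (ln 41 - 2 * ln 3)); [lra|]. field_simplify; lra.
Qed.

Definition tstar := (ln 17 - 2 * ln 3) / (ln 41 - 2 * ln 3).

Lemma tstar_range : 0 <= tstar <= 1.
Proof.
  unfold tstar. pose proof den_pos. pose proof ln9.
  assert (ln 9 < ln 17) by (apply ln_increasing; lra).
  assert (ln 17 < ln 41) by (apply ln_increasing; lra).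
  split.
  - apply Rlt_le, Rdiv_lt_0_compat; lra.
  - apply (Rmult_le_reg_r (ln 41 - 2 * ln 3)); [lra|]. field_simplify; lra.
Qed.

Lemma w41 q : q*q = 41 -> 6 < q -> let w := (q+4)/5 in
  0 + q*(w^2-1)/(w^2+1) = 4 /\ 2*q*w/(w^2+1) = 5 /\
  0 + q*(((q-4)/5)^2-1)/(((q-4)/5)^2+1) = -4 /\ 2*q*((q-4)/5)/(((q-4)/5)^2+1) = 5 /\ / w = (q-4)/5.
Proof.
  intros Hq H4 w.
  assert (Hw2 : w^2 = (57 + 8*q)/25) by (unfold w; field_simplify; nra).
  assert (Hv2 : ((q-4)/5)^2 = (57 - 8*q)/25) by (field_simplify; nra).
  rewrite Hw2, Hv2. repeat split.
  - fdiv.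
  - unfold w. fdiv.
  - fdiv.
  - fdiv.
  - unfold w. fdiv.
Qed.

Lemma sqrt41_sq : sqrt 41 * sqrt 41 = 41.
Proof. apply sqrt_sqrt; lra. Qed.
Lemma sqrt41_gt6 : 6 < sqrt 41.
Proof. pose proof sqrt41_sq. pose proof (sqrt_pos 41). nra. Qed.

Lemma segBC_D : segment ptB ptC ((0, sqrt 41), 1).
Proof.
  pose proof sqrt41_sq. pose proof sqrt41_gt6.
  set (w := (sqrt 41 + 4) / 5).
  assert (Hw : 0 < w) by (unfold w; lra).
  destruct (w41 (sqrt 41)) as (e1 & e2 & e3 & e4 & e5); auto. fold w in e1, e2, e5.
  exists (fun t => Pc 0 (sqrt 41) (ln w + t * (- ln w - ln w))). split.
  - replace (fst ptB) with (Pc 0 (sqrt 41) (ln w)).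
    2:{ rewrite Pc_ln by lra. rewrite e1, e2. reflexivity. }
    replace (fst ptC) with (Pc 0 (sqrt 41) (- ln w)).
    2:{ rewrite Pc_mln by lra. rewrite e5, e3, e4. reflexivity. }
    apply fam_hgeod. apply Pc_pos; lra. apply Pc_kq; lra.
  - exists (/2). split; [lra|]. cbn [fst snd].
    replace (ln w + / 2 * (- ln w - ln w)) with 0 by field.
    rewrite Pc_0. unfold ptB, ptC; cbn [snd]. f_equal. ring.
Qed.

Lemma part_cone : cone ptA ptB ptC ((0, sqrt 17), tstar).
Proof.
  exists ((0, sqrt 41), 1). split; [exact segBC_D|].
  pose proof sqrt41_gt6. pose proof den_pos. pose proof ln9.
  exists (fun t => Pv 0 (ln 3 + t * (ln (sqrt 41) - ln 3))). split.
  - replace (fst ptA) with (Pv 0 (ln 3)).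
    2:{ unfold Pv. rewrite exp_ln by lra. reflexivity. }
    assert (E : Pv 0 (ln (sqrt 41)) = (0, sqrt 41)).
    { unfold Pv; rewrite exp_ln; [reflexivity|lra]. }
    cbn [fst]. rewrite <- E.
    apply (fam_hgeod (Pv 0)). apply Pv_pos. apply Pv_kq.
  - exists tstar. split; [exact tstar_range|]. cbn [fst snd].
    replace (ln 3 + tstar * (ln (sqrt 41) - ln 3)) with (ln (sqrt 17)).
    2:{ rewrite !ln_sqrt_half by lra. unfold tstar. field. lra. }
    unfold Pv. rewrite exp_ln by (apply sqrt_lt_R0; lra). unfold ptA; cbn [snd]. f_equal. ring.
Qed.

Lemma inv_eq_poly x a b : 0 < x -> 0 < b -> x + / x = a / b -> b * (x*x + 1) = x * a.
Proof.
  intros Hx Hb H.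
  replace (b * (x*x+1)) with ((x + / x) * (x * b)) by (field; lra).
  rewrite H. field. lra.
Qed.

Lemma ln_div3 x : 0 < x -> ln (x / 3) = ln x - ln 3.
Proof. intros. unfold Rdiv. rewrite ln_mult, ln_Rinv; lra. Qed.

Lemma part_uniq : forall X, cone ptA ptB ptC X -> fst X = (0, sqrt 17) -> snd X = tstar.
Proof.
  intros X [D [[c [Hc [t1 [Ht1 HD]]]] [c' [Hc' [t2 [Ht2 HX]]]]]] HfX.
  subst X. cbn [fst snd] in HfX |- *.
  assert (HsD : snd D = 1) by (rewrite HD; unfold ptB, ptC; cbn [snd]; ring).
  rewrite HsD. unfold ptA; cbn [snd].
  replace ((1 - t2) * 0 + t2 * 1) with t2 by ring.
  destruct Hc as [Hc0 [Hc1 Hcd]]. destruct Hc' as [Hc'0 [Hc'1 Hc'd]].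
  unfold ptB, ptC, ptA in *; cbn [fst snd] in *.
  assert (HfD : fst D = c t1) by (rewrite HD; reflexivity).
  rewrite HfD in Hc'1, Hc'd.
  destruct (c t1) as [u v] eqn:Ecu.
  try rewrite Ecu in Hc'1; try rewrite Ecu in Hc'd.
  assert (Hv : 0 < v).
  { destruct (Hcd t1 t1 Ht1 Ht1) as [Hp _]. rewrite Ecu in Hp. exact Hp. }
  set (L := dH (0,3) (u,v)).
  assert (H01 : 0 <= 0 <= 1) by lra. assert (H11 : 0 <= 1 <= 1) by lra.
  assert (dAX : dH (0,3) (0, sqrt 17) = t2 * L).
  { destruct (Hc'd 0 t2 H01 Ht2) as [_ h]. rewrite Hc'0, HfX in h. rewrite h.
    unfold L. rewrite Rabs_left1 by lra. ring. }
  assert (dXD : dH (0, sqrt 17) (u,v) = (1 - t2) * L).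
  { destruct (Hc'd t2 1 Ht2 H11) as [_ h]. rewrite Hc'1, HfX in h. rewrite h.
    unfold L. rewrite Rabs_left1 by lra. ring. }
  set (L' := dH (4,5) (-4,5)).
  assert (dBD : dH (4,5) (u,v) = t1 * L').
  { destruct (Hcd 0 t1 H01 Ht1) as [_ h]. rewrite Hc0, Ecu in h. rewrite h.
    unfold L'. rewrite Rabs_left1 by lra. ring. }
  assert (dDC : dH (u,v) (-4,5) = (1 - t1) * L').
  { destruct (Hcd t1 1 Ht1 H11) as [_ h]. rewrite Hc1, Ecu in h. rewrite h.
    unfold L'. rewrite Rabs_left1 by lra. ring. }
  pose proof sqrt17_sq as q17. pose proof sqrt17_gt4 as q17g.
  pose proof sqrt41_sq as q41. pose proof sqrt41_gt6 as q41g.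
  pose proof (ln_sqrt_half 17 ltac:(lra)) as la.
  pose proof (ln_sqrt_half 41 ltac:(lra)) as lb.
  set (a := sqrt 17) in *. set (b := sqrt 41) in *. clearbody a b.
  destruct (dH_exp (0,3) (0,a)) as [EAX1 EAX2]; cbn [snd]; try lra.
  destruct (dH_exp (0,a) (u,v)) as [EXD1 EXD2]; cbn [snd]; try lra.
  destruct (dH_exp (0,3) (u,v)) as [EAD1 EAD2]; cbn [snd]; try lra.
  destruct (dH_exp (4,5) (u,v)) as [EBD1 EBD2]; cbn [snd]; try lra.
  destruct (dH_exp (u,v) (-4,5)) as [EDC1 EDC2]; cbn [snd]; try lra.
  destruct (dH_exp (4,5) (-4,5)) as [EBC1 EBC2]; cbn [snd]; try lra.
  unfold kq in *; cbn [fst snd] in *.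
  assert (HAX : exp (dH (0,3) (0,a)) = a / 3).
  { apply (inv_sum_uniq (exp (dH (0,3) (0,a))) (a/3)); [lra|apply (Rmult_le_reg_r 3); lra|].
    rewrite EAX2. field_simplify; [reflexivity|lra..]. }
  set (F := exp (dH (0,a) (u,v))) in *.
  assert (HAD : exp (dH (0,3) (u,v)) = a / 3 * F).
  { fold L. replace L with (t2 * L + (1 - t2) * L) by ring.
    rewrite exp_plus, <- dAX, <- dXD, HAX. reflexivity. }
  rewrite HAD in EAD2.
  apply inv_eq_poly in EXD2; [|lra|nra].
  apply inv_eq_poly in EAD2; [|nra|nra].
  replace ((0 - u)^2) with (u*u) in * by ring.
  assert (HvF : v = a * F) by nra.
  assert (Hu : u = 0) by nra.
  subst u.
  assert (Edd : exp (dH (4,5) (0,v)) = exp (dH (0,v) (-4,5))).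
  { apply (inv_sum_uniq (exp (dH (4,5) (0,v))) (exp (dH (0,v) (-4,5)))); [lra|lra|].
    rewrite EBD2, EDC2. field. lra. }
  assert (EBC : exp (dH (4,5) (-4,5)) = exp (dH (4,5) (0,v)) * exp (dH (4,5) (0,v))).
  { fold L'. replace L' with (t1 * L' + (1 - t1) * L') by ring.
    rewrite exp_plus, <- dBD, <- dDC, Edd. reflexivity. }
  set (w := (b+4)/5).
  assert (Hw : w * ((b-4)/5) = 1) by (unfold w; field_simplify; nra).
  assert (Hwinv : / (w*w) = ((b-4)/5) * ((b-4)/5)).
  { rewrite <- (Rmult_1_r (/ (w*w))). rewrite <- Hw at 1. rewrite <- (Rmult_1_r (w * ((b - 4) / 5))) at 1. rewrite <- Hw.
    field. unfold w; lra. }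
  assert (EBCw : exp (dH (4,5) (-4,5)) = w * w).
  { apply (inv_sum_uniq (exp (dH (4,5) (-4,5))) (w*w)); [lra|unfold w; nra|].
    rewrite EBC2, Hwinv. unfold w. field_simplify. nra. }
  assert (EBDw : exp (dH (4,5) (0,v)) = w) by (unfold w in *; nra).
  rewrite EBDw in EBD2. apply inv_eq_poly in EBD2; [|unfold w; lra|lra].
  assert (Hvb0 : (b+4) * (2*b*v - 41 - v*v) = 0) by (unfold w in EBD2; nra).
  assert (Hvb : v = b).
  { destruct (Rmult_integral _ _ Hvb0) as [h|h]; [lra|nra]. }
  assert (HL : L = ln b - ln 3).
  { assert (exp L = b / 3). { unfold L. rewrite HAD, <- Hvb, HvF. field. }
    rewrite <- (ln_exp L), H. rewrite <- Hvb. apply ln_div3. lra. }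
  assert (HLA : t2 * L = ln a - ln 3).
  { rewrite <- dAX, <- (ln_exp (dH (0,3) (0,a))), HAX. apply ln_div3. lra. }
  rewrite HL, la, lb in HLA. pose proof den_pos.
  unfold tstar. apply (Rmult_eq_reg_r (ln 41 - 2 * ln 3)); [|lra].
  field_simplify; lra.
Qed.

Theorem mainTheorem11 :
  (conv (triple ptA ptB ptC) <> cone ptA ptB ptC) /\
  conv (triple ptA ptB ptC) ((0, sqrt 17), 1 - ln 2 / ln 3) /\
  cone ptA ptB ptC ((0, sqrt 17), (ln 17 - 2 * ln 3) / (ln 41 - 2 * ln 3)) /\
  (forall X, cone ptA ptB ptC X -> fst X = (0, sqrt 17) ->
     snd X = (ln 17 - 2 * ln 3) / (ln 41 - 2 * ln 3)) /\
  1 - ln 2 / ln 3 < 2 / 5 /\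
  2 / 5 < (ln 17 - 2 * ln 3) / (ln 41 - 2 * ln 3).
Proof.
  pose proof part_conv as Hc. pose proof part_cone as Hk. pose proof part_uniq as Hu.
  pose proof num1. pose proof num2. unfold tstar in *.
  split; [|split; [exact Hc|split; [exact Hk|split; [exact Hu|split; assumption]]]].
  intros E. rewrite E in Hc. specialize (Hu _ Hc eq_refl). cbn [snd] in Hu. lra.
Qed.
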